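(* Let $m\in\mathbb N$, $M\in{\rm Mat}_m(\mathbb Z)$, and let $S\in{\rm Mat}_m(\mathbb Z)\cap GL_m(\mathbb Q)$ be such that $S^{-1}MS$ is the rational canonical form of $M$. Then for every prime $p$ with $\gcd(\det(S),p)=1$ and for which $M$ has finite $\mathbb Z_p$-order $k$, the move graph $\Gamma_{M,\,p}$ contains a directed $k$-cycle.
   Context: $\mathbb Z_n$ denotes the integers modulo $n$. For $M\in{\rm Mat}_m(\mathbb Z)$, the move graph $\Gamma_{M,\,n}$ is the directed graph with vertex set $\mathbb Z_n^m$ and arc set $\{({\bf x},{\bf y}) : {\bf y}^T=M{\bf x}^T \text{ in } \mathbb Z_n^m\}$ (loops allowed). The $\mathbb Z_n$-order of $M$ is the least positive integer $k$ (if it exists) such that $M^k$ acts as the identity on $\mathbb Z_n^m$. A directed $k$-cycle is a cycle of length $k$ in the underlying undirected graph such that in the induced directed subgraph on it every vertex has in-degree and out-degree $1$ (a loop counts as a directed $1$-cycle, a pair of opposite arcs as a directed $2$-cycle). *)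

(* Defs.v *)
From mathcomp Require Import all_boot all_order all_algebra.
Import GRing.Theory Num.Theory.
Local Open Scope ring_scope.

Definition Zn_mx (n : nat) {m : nat} (M : 'M[int]_m) : 'M['Z_n]_m :=
  map_mx (fun z : int => z%:~R) M.

(* Arc relation of the move graph Gamma_{M,n}: vertices are (column) vectors
   of 'Z_n^m, and (x, y) is an arc iff y^T = M x^T in 'Z_n^m. *)
Definition move_arc (n : nat) {m : nat} (M : 'M[int]_m) : rel 'cV['Z_n]_m :=
  fun x y => y == Zn_mx n M *m x.

Definition acts_as_id (n : nat) {m : nat} (M : 'M[int]_m) (k : nat) : Prop :=
  forall x : 'cV['Z_n]_m, (Zn_mx n M) ^+ k *m x = x.

Definition has_Zn_order (n : nat) {m : nat} (M : 'M[int]_m) (k : nat) : Prop :=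
  (0 < k)%N /\ acts_as_id n M k /\
  (forall j : nat, (0 < j)%N -> (j < k)%N -> ~ acts_as_id n M j).

(* s lists (in cyclic order) the vertices of a directed cycle of the directed
   graph with arc relation e (loops allowed): the vertices are distinct, they
   form a cycle in the underlying undirected graph (consecutive vertices,
   cyclically, are adjacent; for one vertex this is a loop), and in the
   subgraph induced on them every vertex has in-degree and out-degree 1. *)
Definition directed_cycle {T : finType} (e : rel T) (s : seq T) : Prop :=
  [/\ uniq s, (0 < size s)%N,
      cycle (fun x y => e x y || e y x) s &
      forall x, x \in s -> count (fun y => e x y) s = 1%N /\
                           count (fun y => e y x) s = 1%N].

Definition has_directed_cycle {T : finType} (e : rel T) (k : nat) : Prop :=
  exists s : seq T, size s = k /\ directed_cycle e s.

(* Companion matrix of a monic polynomial, in the Frobenius-normal-form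
   convention: ones on the subdiagonal, last column (-c_0, ..., -c_{d-1}). *)
Definition frob_companion {R : nzRingType} (p : {poly R}) :=
  (companionmx p)^T.

Definition is_rcf {m : nat} (A : 'M[rat]_m) : Prop :=
  exists (r : nat) (f : 'I_r -> {poly rat})
         (e : (\sum_(i < r) (size (f i)).-1)%N = m),
    [/\ forall i, f i \is monic,
        forall i, (1 < size (f i))%N,
        forall i j : 'I_r, (i <= j)%N -> f i %| f j &
        A = castmx (e, e) (\mxdiag_(i < r) frob_companion (f i))].

(* Main.v *)
Require Import Defs.
From mathcomp Require Import all_boot all_order all_algebra.
From Stdlib Require Import Classical.
From mathcomp Require Import zify.
Import GRing.Theory Num.Theory.
Local Open Scope ring_scope.

Section Ann.
Variables (F : fieldType) (n : nat) (A : 'M[F]_n.+1).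

Definition hx (f : {poly F}) (x : 'cV[F]_n.+1) := horner_mx A f *m x.

Lemma hxM f g x : hx (f * g) x = hx f (hx g x).
Proof. by rewrite /hx rmorphM /= -mulmxE mulmxA. Qed.

Lemma hx0 f : hx f 0 = 0.
Proof. by rewrite /hx mulmx0. Qed.

Lemma hxN f v : hx f (- v) = - hx f v.
Proof. by rewrite /hx mulmxN. Qed.

Lemma hxC f g x : hx (f * g) x = hx (g * f) x.
Proof. by rewrite mulrC. Qed.

Definition annP x (q : {poly F}) := forall f, (hx f x == 0) = (q %| f).

Lemma hx_dvd x q f : annP x q -> q %| f -> hx f x = 0.
Proof. by move=> H Hd; apply/eqP; rewrite H. Qed.
Arguments hx_dvd [x q f].

Lemma L1 x : exists q, q != 0 /\ annP x q.
Proof.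
have H : forall i (q : {poly F}), (size q <= i)%N -> q != 0 -> hx q x = 0 ->
    exists q, q != 0 /\ annP x q.
  elim=> [|i IH] q Hs Hq Ha.
    by move: Hq; rewrite -size_poly_eq0; case: (size q) Hs.
  case: (classic (exists f, hx f x = 0 /\ ~~ (q %| f))).
    move=> [f [Hf Hd]].
    have Hr : f %% q != 0 by apply: contra Hd => /eqP/modp_eq0P.
    apply: (IH (f %% q)) => //.
      by rewrite -ltnS (leq_trans _ Hs) // ltn_modp.
    move: Hf; rewrite {1}(divp_eq f q) /hx rmorphD mulmxDl.
    by rewrite -/(hx _ x) -/(hx _ x) hxM Ha hx0 add0r.
  move=> Hno; exists q; split=> // f; apply/idP/idP.
    move=> /eqP Hf; apply/negPn/negP => Hd; apply: Hno; by exists f.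
  by rewrite dvdp_eq => /eqP ->; rewrite hxM Ha hx0.
apply: (H _ (char_poly A) (leqnn _)).
  exact: monic_neq0 (char_poly_monic A).
by rewrite /hx Cayley_Hamilton mul0mx.
Qed.

Lemma L2 x f g : annP x (f * g) -> f != 0 -> annP (hx f x) g.
Proof.
move=> H Hf h; rewrite -hxM H [h * f]mulrC dvdp_mul2l //.
Qed.

Lemma L3 x y a b : annP x a -> annP y b -> coprimep a b ->
  annP (x + y) (a * b).
Proof.
move=> Ha Hb Hab h; rewrite Gauss_dvdp //; apply/idP/idP.
  rewrite /hx mulmxDr -!/(hx _ _) addr_eq0 => /eqP Hxy.
  have H1 : hx (b * h) x = 0.
    by rewrite hxM Hxy hxN -hxM hxC hxM (hx_dvd Hb) ?dvdpp // hx0 oppr0.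
  have H2 : hx (a * h) y = 0.
    have Hyx : hx h y = - hx h x by rewrite Hxy opprK.
    by rewrite hxM Hyx hxN -hxM hxC hxM (hx_dvd Ha) ?dvdpp // hx0 oppr0.
  move/eqP: H1; rewrite Ha Gauss_dvdpr // => ->.
  by move/eqP: H2; rewrite Hb Gauss_dvdpr // coprimep_sym.
case/andP=> Hah Hbh.
by rewrite /hx mulmxDr -!/(hx _ _) (hx_dvd Ha) // (hx_dvd Hb) // addr0.
Qed.

End Ann.
Arguments hx {F n} A f x.
Arguments annP {F n} A x q.
Arguments L1 {F n} A x.
Arguments L2 {F n A x f g}.
Arguments L3 {F n A x y a b}.
Section PolyFacts.
Variable F : fieldType.
Implicit Types f g m n : {poly F}.

Definition primelike (pi : {poly F}) :=
  (1 < size pi)%N /\ forall f, (pi %| f) || coprimep pi f.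

Lemma exists_primelike f : (1 < size f)%N -> exists pi, primelike pi /\ pi %| f.
Proof.
have H : forall i f, (size f <= i)%N -> (1 < size f)%N ->
    exists pi, primelike pi /\ pi %| f.
  elim=> [|i IH] {}f Hs H1; first by move: H1; case: (size f) Hs.
  case: (classic (primelike f)) => Hp; first by exists f; rewrite dvdpp.
  have [g Hg] : exists g, ~~ ((f %| g) || coprimep f g).
    apply: NNPP => Hn; apply: Hp; split=> // g.
    by apply: NNPP => Hg; apply: Hn; exists g; apply/negP.
  rewrite negb_or in Hg; case/andP: Hg => Hfg Hcop.
  have Hf0 : f != 0 by rewrite -size_poly_gt0 ltnW.
  set d := gcdp f g.
  have Hd0 : d != 0 by rewrite gcdp_eq0 negb_and Hf0.
  have Hd1 : (1 < size d)%N.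
    move: Hcop; rewrite coprimep_def -/d.
    by move: Hd0; rewrite -size_poly_gt0; case: (size d) => [|[|]].
  have Hdf : d %| f by apply: dvdp_gcdl.
  have Hlt : (size d < size f)%N.
    rewrite ltn_neqAle dvdp_leq // andbT dvdp_size_eqp //.
    apply/negP => Heq; apply/negP: Hfg; apply/negPn.
    by rewrite -(eqp_dvdl _ Heq) dvdp_gcdr.
  have [pi [Hpi Hpd]] := IH d (leq_trans (leq_trans Hlt Hs) (leqnn _)) Hd1.
  by exists pi; split=> //; apply: dvdp_trans Hdf.
by move=> Hf; apply: (H _ f (leqnn _)).
Qed.

Lemma decomp pi m : primelike pi -> m != 0 ->
  exists e m0, m = pi ^+ e * m0 /\ ~~ (pi %| m0).
Proof.
move=> [Hs1 Hpl].
have Hpi0 : pi != 0 by rewrite -size_poly_gt0 ltnW.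
have H : forall i m, (size m <= i)%N -> m != 0 ->
    exists e m0, m = pi ^+ e * m0 /\ ~~ (pi %| m0).
  elim=> [|i IH] {}m Hs Hm0.
    by move: Hm0; rewrite -size_poly_gt0; case: (size m) Hs.
  case Hd: (pi %| m); last by exists 0%N, m; rewrite expr0 mul1r Hd.
  have Hm : m = m %/ pi * pi by apply/eqP; rewrite -dvdp_eq.
  have Hq0 : m %/ pi != 0 by apply: contraNneq Hm0 => Hq; rewrite Hm Hq mul0r.
  have Hsz : (size (m %/ pi)%R <= i)%N.
    rewrite size_divp //; move: Hs Hs1; clear; move: (size m) (size pi) => a b; lia.
  have [e [m0 [He Hn]]] := IH _ Hsz Hq0.
  exists e.+1, m0; split=> //.
  by rewrite Hm He exprSr mulrAC.
by apply: H (leqnn _).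
Qed.

Lemma L4 n m : n != 0 -> m != 0 -> ~~ (n %| m) ->
  exists pi e m0, [/\ primelike pi, m = pi ^+ e * m0, coprimep pi m0 &
                      pi ^+ e.+1 %| n].
Proof.
have H : forall i n m, (size n <= i)%N -> n != 0 -> m != 0 -> ~~ (n %| m) ->
  exists pi e m0, [/\ primelike pi, m = pi ^+ e * m0, coprimep pi m0 &
                      pi ^+ e.+1 %| n].
  elim=> [|i IH] {}n {}m Hs Hn0 Hm0 Hnd.
    by move: Hn0; rewrite -size_poly_gt0; case: (size n) Hs.
  have [Hsn1 | Hsn1] := leqP (size n) 1%N.
    have Hs1 : size n == 1%N.
      by rewrite eqn_leq Hsn1 size_poly_gt0.
    case/size_poly1P: Hs1 => c Hc Hnc.
    by move: Hnd; rewrite Hnc; move/modp_eq0P: (modpC m Hc) => ->.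
  have [pi [Hpl Hpin]] := exists_primelike _ Hsn1.
  have Hpi0 : pi != 0 by rewrite -size_poly_gt0 ltnW //; case: Hpl.
  have [e [m0 [Hm Hpm0]]] := decomp _ _ Hpl Hm0.
  have Hcop : coprimep pi m0.
    by case: Hpl => _ /(_ m0); rewrite (negbTE Hpm0).
  case Hde: (pi ^+ e.+1 %| n); first by exists pi, e, m0.
  have [f [n0 [Hn Hpn0]]] := decomp _ _ Hpl Hn0.
  case: f Hn => [|f] Hn.
    by move: Hpn0; rewrite -(mul1r n0) -(expr0 pi) -Hn Hpin.
  have Hfe : (f < e)%N.
    rewrite ltnNge; apply/negP => Hef; move/negP: Hde; apply.
    by rewrite Hn dvdp_mulr // dvdp_exp2l.
  have Hn00 : n0 != 0 by apply: contraNneq Hn0 => Hz; rewrite Hn Hz mulr0.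
  have Hm00 : m0 != 0 by apply: contraNneq Hm0 => Hz; rewrite Hm Hz mulr0.
  have Hnd0 : ~~ (n0 %| m0).
    apply: contra Hnd => Hd; rewrite Hn Hm dvdp_mul // dvdp_exp2l //.
  have Hsz0 : (size n0 <= i)%N.
    rewrite -ltnS (leq_trans _ Hs) // Hn exprS -mulrA.
    have Hr0 : pi ^+ f * n0 != 0 by rewrite mulf_neq0 // expf_neq0.
    rewrite size_mul //.
    have : (size n0 <= size (pi ^+ f * n0)%R)%N by rewrite dvdp_leq // dvdp_mull.
    case: Hpl => Hs1 _; move: Hs1; clear; move: (size n0) (size (pi ^+ f * n0)%R) (size pi) => a b c; lia.
  have [s [e' [m1 [Hsl Hm0e Hcs Hsd]]]] := IH _ _ Hsz0 Hn00 Hm00 Hnd0.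
  exists s, e', (pi ^+ e * m1); split=> //.
  - by rewrite Hm Hm0e mulrCA.
  - rewrite coprimepMr Hcs andbT coprimep_expr //.
    case: Hsl => Hss /(_ pi) /orP [Hsp|] //.
    case: Hpl => _ /(_ s) /orP [Hps|Hcps].
      move/negP: Hpn0; case; apply: dvdp_trans Hps _.
      by apply: dvdp_trans _ Hsd; rewrite exprS dvdp_mulr.
    have : coprimep s s by apply: coprimep_dvdl Hsp _; rewrite coprimep_sym.
    by rewrite coprimep_def gcdpp; move/eqP=> Hs1; move: Hss; rewrite Hs1.
  - by rewrite Hn; apply: dvdp_mull.
by move=> Hn0 Hm0 Hnd; apply: (H _ n m (leqnn _)).
Qed.

End PolyFacts.
Arguments L4 {F n m}.

Section CoreSec.
Variables (F : fieldType) (n : nat) (A : 'M[F]_n.+1).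

Lemma mx_eq0_cols (B : 'M[F]_n.+1) : (forall y : 'cV_n.+1, B *m y = 0) -> B = 0.
Proof.
move=> H; apply/matrixP=> i j; have := H (delta_mx j 0).
by rewrite -colE => /matrixP/(_ i 0); rewrite !mxE.
Qed.

Lemma annP_char x q : annP A x q -> q %| char_poly A.
Proof. by move=> Ha; rewrite -Ha /hx Cayley_Hamilton mul0mx. Qed.
Arguments annP_char [x q].

Lemma annP_size x q : annP A x q -> (size q <= n.+2)%N.
Proof.
move=> Ha; rewrite (_ : n.+2 = size (char_poly A)); last by rewrite size_char_poly.
have Hd := annP_char Ha. exact: (dvdp_leq (monic_neq0 (char_poly_monic A)) Hd).
Qed.
Arguments annP_size [x q].

Lemma annP_neq0 x q : annP A x q -> q != 0.
Proof.
move=> Ha; apply/negP => /eqP Hq; have := annP_char Ha.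
rewrite Hq dvd0p => /eqP Hc; have := char_poly_monic A.
by rewrite Hc monicE lead_coef0 eq_sym oner_eq0.
Qed.
Arguments annP_neq0 [x q].

Lemma core : exists x : 'cV[F]_n.+1, forall j, A ^+ j *m x = x -> A ^+ j = 1.
Proof.
suff H : forall b x (q : {poly F}), (n.+3 - size q <= b)%N -> annP A x q ->
    exists z : 'cV[F]_n.+1, forall j, A ^+ j *m z = z -> A ^+ j = 1.
  have [q [_ Hq]] := L1 A 0; exact: (H _ 0 q (leqnn _) Hq).
elim=> [|b IH] x q Hb Ha.
  by have := annP_size Ha; move: Hb; move: (size q) => a; lia.
have Hq0 := annP_neq0 Ha.
case Hqa: (horner_mx A q == 0).
  exists x => j Hj.
  have Hh : hx A ('X^j - 1) x == 0.
    by rewrite /hx rmorphB rmorphXn /= horner_mx_X rmorph1 mulmxBl Hj mul1mx subrr.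
  rewrite Ha dvdp_eq in Hh; move/eqP: Hh => Hh.
  have : horner_mx A ('X^j - 1) = 0 by rewrite Hh rmorphM /= (eqP Hqa) mulr0.
  by rewrite rmorphB rmorphXn /= horner_mx_X rmorph1 => /eqP; rewrite subr_eq0 => /eqP.
have [y Hyq] : exists y, hx A q y != 0.
  apply: NNPP => Hn; move/negP: Hqa; apply; apply/eqP; apply: mx_eq0_cols => y.
  by apply/eqP; apply: NNPP => Hy; apply: Hn; exists y; apply/negP.
have [qy [Hqy0 Hy]] := L1 A y.
have Hnd : ~~ (qy %| q) by rewrite -Hy.
have [pi [e [m0 [Hpl Hq Hcop Hdiv]]]] := L4 Hqy0 Hq0 Hnd.
have Hpi0 : pi != 0 by rewrite -size_poly_gt0; case: Hpl => /ltnW.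
move: Hdiv; rewrite dvdp_eq => /eqP Hqy.
set r := qy %/ pi ^+ e.+1 in Hqy.
have Hr0 : r != 0 by apply: contraNneq Hqy0 => Hz; rewrite Hqy Hz mul0r.
have Hx' : annP A (hx A (pi ^+ e) x) m0.
  by apply: L2; [rewrite -Hq | rewrite expf_neq0].
have Hy' : annP A (hx A r y) (pi ^+ e.+1).
  by apply: L2 => //; rewrite -Hqy.
have Hc : coprimep m0 (pi ^+ e.+1) by rewrite coprimep_sym coprimep_expl.
have Hs := L3 Hx' Hy' Hc.
apply: (IH _ _ _ Hs).
have Heq : m0 * pi ^+ e.+1 = pi * q.
  by rewrite Hq exprS mulrCA [m0 * _]mulrC.
rewrite Heq.
rewrite size_mul //.
case: Hpl => Hs1 _; move: Hb Hs1; move: (size pi) (size q) => a c; lia.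
Qed.

End CoreSec.
Arguments core {F n} A.

Lemma core_any (F : fieldType) n (A : 'M[F]_n) :
  exists x : 'cV[F]_n, forall j, A ^+ j *m x = x -> A ^+ j = 1.
Proof.
case: n A => [|n] A; last exact: core.
by exists 0 => j _; apply/matrixP => i; case: i.
Qed.

Lemma gen (F : finFieldType) n (A : 'M[F]_n) k :
  (0 < k)%N -> (forall x : 'cV[F]_n, A ^+ k *m x = x) ->
  (forall j, (0 < j)%N -> (j < k)%N -> ~ (forall x : 'cV[F]_n, A ^+ j *m x = x)) ->
  has_directed_cycle (fun x y : 'cV[F]_n => y == A *m x) k.
Proof.
move=> Hk Hid Hmin.
have [x Hx] := core_any _ _ A.
have Ak : A ^+ k = 1 := Hx k (Hid x).
have Hdiff : forall i j, (i < j)%N -> (j < k)%N -> A ^+ i *m x = A ^+ j *m x -> False.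
  move=> i j Hij Hjk Heq.
  have H1 : A ^+ (j - i) *m x = x.
    have Hik : (i <= k)%N by apply: ltnW; apply: leq_trans Hij (ltnW Hjk).
    have E : A ^+ (k - i) *m (A ^+ i *m x) = A ^+ (k - i) *m (A ^+ j *m x) by rewrite Heq.
    rewrite !mulmxA !mulmxE -!exprD subnK // Ak mul1mx in E.
    have Hkk : (k - i + j = (j - i) + k)%N by move: Hij Hik; clear; lia.
    by rewrite Hkk exprD Ak mulr1 in E.
  have := Hx _ H1 => HA.
  apply: (Hmin (j - i)%N); first by rewrite subn_gt0.
    by rewrite (leq_ltn_trans (leq_subr _ _) Hjk).
  by move=> y; rewrite HA mul1mx.
set f := fun v : 'cV[F]_n => A *m v.
have Hit : forall i, iter i f x = A ^+ i *m x.
  elim=> [|i IH]; first by rewrite expr0 mul1mx.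
  by rewrite iterS IH /f mulmxA mulmxE -exprS.
have Hmem : forall j, A ^+ j *m x \in traject f x k.
  move=> j; apply/trajectP; exists (j %% k)%N; first by rewrite ltn_pmod.
  rewrite Hit {1}(divn_eq j k) exprD mulnC exprM Ak expr1n mul1r //.
have Huniq : uniq (traject f x k).
  apply/(uniqP x) => i j; rewrite !inE size_traject => Hi Hj.
  rewrite !nth_traject // !Hit => Heq.
  case: (ltngtP i j) => // Hij.
    by case: (Hdiff _ _ Hij Hj Heq).
  by case: (Hdiff _ _ Hij Hi (esym Heq)).
exists (traject f x k); split; first by rewrite size_traject.
split=> //; first by rewrite size_traject.
  case: k Hk Hid Hmin Ak Hdiff Hmem Huniq => [|k'] // _ _ _ Ak _ _ _.
  rewrite trajectS /= rcons_path; apply/andP; split.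
    apply: sub_path (fpath_traject f x k') => a b /= /eqP <-.
    by rewrite eqxx.
  have -> : A *m last x (traject f (f x) k') = x by rewrite last_traject Hit mulmxA mulmxE -exprS Ak mul1mx.
  by rewrite eqxx.
move=> v /trajectP [i Hi ->]; rewrite Hit; split.
  rewrite (eq_count (a2 := pred1 (A ^+ i.+1 *m x))); last first.
    by move=> y /=; rewrite mulmxA mulmxE -exprS.
  by rewrite count_uniq_mem // Hmem.
rewrite (eq_count (a2 := pred1 (A ^+ (k.-1 + i) *m x))).
  by rewrite count_uniq_mem // Hmem.
move=> y /=; apply/eqP/eqP => [Hy|->].
  by rewrite exprD -mulmxA Hy mulmxA mulmxE -exprSr prednK // Ak mul1mx.
by rewrite mulmxA mulmxE -exprS -addSn prednK // exprD Ak mul1r.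
Qed.

Theorem theorem3p6 (m : nat) (M S : 'M[int]_m) :
  \det (map_mx (fun z : int => z%:~R : rat) S) != 0 ->
  is_rcf (invmx (map_mx (fun z : int => z%:~R : rat) S)
          *m map_mx (fun z : int => z%:~R : rat) M
          *m map_mx (fun z : int => z%:~R : rat) S) ->
  forall (p k : nat), prime p -> coprime `|\det S|%N p ->
    has_Zn_order p M k ->
    has_directed_cycle (move_arc p M) k.
Proof.
move=> _ _ p k pr _ [Hk [Hid Hmin]].
move: Hid Hmin; rewrite /acts_as_id /move_arc -(pdiv_id pr) => Hid Hmin.
have := @gen ('F_p : finFieldType) m (Zn_mx (pdiv p) M) k Hk. move=> G. apply: G; [exact: Hid | exact: Hmin].
Qed.
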